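(* Let $K$ be a finite field of characteristic $p$ and let $T$ be a finite $p$-group. Then the one-dimensional ideal $K\sum_{t\in T}t$ of $KT$ is checkable if and only if $T$ is cyclic.
   Context: A right ideal $I\le KT$ is called checkable if there is $v\in KT$ with $I=\{a\in KT: va=0\}$. *)

(* Defs.v *)
From HB Require Import structures.
From mathcomp Require Import all_boot all_order all_algebra all_fingroup all_solvable all_field.
Set Implicit Arguments. Unset Strict Implicit. Unset Printing Implicit Defensive.
Import GRing.Theory.
Local Open Scope ring_scope.

(* The group algebra KT of a finite group T (the whole finGroupType gT) over
   a ring K: elements are functions T -> K (a = \sum_t a(t) t), with the
   K-vector space structure of {ffun gT -> K}. *)
Definition galg (gT : finGroupType) (K : nzRingType) := {ffun gT -> K}.

Definition gamul (gT : finGroupType) (K : nzRingType) (a b : galg gT K)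
  : galg gT K :=
  [ffun g => \sum_(h : gT) a h * b (h^-1 * g)%g].

Definition gasum (gT : finGroupType) (K : nzRingType) : galg gT K :=
  [ffun _ => 1].

Definition checkable (gT : finGroupType) (K : nzRingType)
  (I : galg gT K -> Prop) : Prop :=
  exists v : galg gT K, forall a : galg gT K, I a <-> gamul v a = 0.

Definition sum_ideal (gT : finGroupType) (K : nzRingType) (a : {ffun gT -> K}) : Prop :=
  exists c : K, a = [ffun t => c * gasum gT K t].

(* Main.v *)
Require Import Defs.
From HB Require Import structures.
From mathcomp Require Import all_boot all_order all_algebra all_fingroup all_solvable all_field.
From mathcomp Require Import all_character.
From mathcomp Require Import ring.
Set Implicit Arguments. Unset Strict Implicit. Unset Printing Implicit Defensive.
Import GRing.Theory.
Local Open Scope ring_scope.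
Lemma Fp_val_add (K : nzRingType) p (charK : p \in [pchar K]) (a b : 'F_p) :
  ((val (a + b)%R)%:R : K) = (val a)%:R + (val b)%:R.
Proof.
have pr := pcharf_prime charK.
have -> : (a + b)%R = ((val a + val b)%:R : 'F_p) by rewrite natrD !natr_Zp.
by rewrite [val _]/= (val_Fp_nat pr) GRing.natr_mod_pchar // natrD.
Qed.

Lemma noncyclic_homs (K : nzRingType) p (gT : finGroupType)
  (charK : p \in [pchar K]) (pT : (p.-group [set: gT])%g)
  (ncyc : ~~ cyclic [set: gT]%g) :
  exists phi psi : gT -> K, exists t1 t2,
  (forall x y, phi (x*y)%g = phi x + phi y) /\
  (forall x y, psi (x*y)%g = psi x + psi y) /\
  phi t1 = 1 /\ psi t1 = 0 /\ phi t2 = 0 /\ psi t2 = 1.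
Proof.
have pr := pcharf_prime charK.
set G := [set: gT]%G.
have abelE := Phi_quotient_abelem pT.
have ncE : ~~ cyclic (G / 'Phi(G))%g.
  by apply: contra ncyc; apply: Phi_quotient_cyclic.
have ntE : (G / 'Phi(G))%g != 1%g.
  by apply: contra ncE => /eqP ->; apply: cyclic1.
have [_ _ [m cardE]] := pgroup_pdiv (abelem_pgroup abelE) ntE.
have dimE : (1 < 'dim (G / 'Phi(G))%g)%N.
  rewrite /abelem_dim' cardE pdiv_pfactor // pfactorK //=.
  by move: ncE; rewrite (abelem_cyclic abelE) cardE pfactorK // -ltnNge.
set ErV := abelem_rV abelE ntE.
set i0 : 'I_('dim (G / 'Phi(G))%g) := Ordinal (ltnW dimE).
set i1 : 'I_('dim (G / 'Phi(G))%g) := Ordinal dimE.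
have nPhi : forall x : gT, x \in 'N('Phi(G))%g.
  by move=> x; rewrite (subsetP (normal_norm (Phi_normal G))) ?inE.
have ErVM : forall x y : gT, ErV (coset 'Phi(G) (x * y)%g) =
    ErV (coset 'Phi(G) x) + ErV (coset 'Phi(G) y).
  move=> x y; rewrite morphM ?nPhi //.
  by rewrite /ErV abelem_rV_M // mem_quotient ?inE.
pose f (i : 'I_('dim (G / 'Phi(G))%g)) (x : gT) : K :=
  (val (ErV (coset 'Phi(G) x) 0 i))%:R.
have fM : forall i x y, f i (x * y)%g = f i x + f i y.
  by move=> i x y; rewrite /f ErVM mxE Fp_val_add.
have surj : forall u, exists t, ErV (coset 'Phi(G) t) = u.
  move=> u; have [t _ Ht] := cosetP (rVabelem abelE ntE u).
  by exists t; rewrite -Ht /ErV rVabelemK.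
have [t1 Ht1] := surj (delta_mx 0 i0).
have [t2 Ht2] := surj (delta_mx 0 i1).
exists (f i0), (f i1), t1, t2.
do 2!(split; first exact: fM).
rewrite /f Ht1 Ht2 !mxE /=.
by rewrite Fp_cast // modn_small ?prime_gt1.
Qed.



Lemma hom1 (gT : finGroupType) (K : zmodType) (f : gT -> K)
  (hf : forall x y, f (x * y)%g = f x + f y) : f 1%g = 0.
Proof.
have := hf 1%g 1%g; rewrite mulg1 => /(congr1 (fun z => z - f 1%g)).
by rewrite subrr addrK => ->.
Qed.

Lemma sum_delta (gT : finGroupType) (K : nzRingType) (f : gT -> K) g :
  \sum_i (i == g)%:R * f i = f g.
Proof.
rewrite (bigD1 g) //= eqxx mul1r big1 ?addr0 // => i /negPf ->.
by rewrite mul0r.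
Qed.

Lemma galg0E (gT : finGroupType) (K : nzRingType) x : (0 : galg gT K) x = 0.
Proof. exact: ffunE. Qed.

Lemma gamulE (gT : finGroupType) (K : nzRingType) (v a : galg gT K) x :
  gamul v a x = \sum_(h : gT) v h * a (h^-1 * x)%g.
Proof. by rewrite /gamul ffunE. Qed.

Lemma gamul_hom (gT : finGroupType) (K : comNzRingType) (v : galg gT K)
  (phi : gT -> K) (hphi : forall x y, phi (x * y)%g = phi x + phi y) x :
  gamul v (finfun phi) x = (\sum_h v h) * phi x - \sum_h v h * phi h.
Proof.
have phi1 := hom1 hphi.
have phiV h : phi h^-1%g = - phi h.
  by apply/eqP; rewrite -addr_eq0 -hphi mulVg phi1.
rewrite gamulE mulr_suml -sumrB; apply: eq_bigr => h _.
by rewrite ffunE hphi phiV mulrDr mulrN addrC.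
Qed.

Theorem mainTheorem7 (K : finFieldType) (p : nat) (gT : finGroupType)
  (charK : p \in [pchar K]%R) (pT : (p.-group [set: gT])%g) :
  checkable (sum_ideal (K := K) (gT := gT)) <-> cyclic [set: gT]%g.
Proof.
split.
- move=> [v Hv]; have [//|ncyc] := boolP (cyclic [set: gT]%g); exfalso.
  have [phi [psi [t1 [t2 [hphi [hpsi [p1 [q1 [p2 q2]]]]]]]]] :=
    noncyclic_homs charK pT ncyc.
  have eps : \sum_h v h = 0.
    have : gamul v (gasum gT K) = 0.
      by apply/Hv; exists 1; apply/ffunP => t; rewrite !ffunE mul1r.
    move=> H; have := congr1 (fun f : galg gT K => f 1%g) H.
    rewrite /= gamulE ffunE => E; rewrite -[RHS]E.
    by apply: eq_bigr => h _; rewrite ffunE mulr1.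
  have kerc : forall a, gamul v a = 0 -> forall x, a x = a 1%g.
    move=> a /Hv [c ->] x; by rewrite !ffunE.
  pose cf (f : gT -> K) := \sum_h v h * f h.
  have homker : forall f : gT -> K, (forall x y, f (x * y)%g = f x + f y) ->
      cf f = 0 -> forall x, f x = f 1%g.
    move=> f hf cf0 x.
    have := kerc (finfun f) _ x; rewrite !ffunE; apply.
    by apply/ffunP => y; rewrite gamul_hom // eps mul0r ffunE -/(cf f) cf0 subrr.
  pose g x := cf psi * phi x - cf phi * psi x.
  have hg : forall x y, g (x * y)%g = g x + g y.
    by move=> x y; rewrite /g hphi hpsi; ring.
  have cg : cf g = 0.
    rewrite /cf /g.
    under eq_bigr => h _ do rewrite mulrBr mulrCA [v h * (cf phi * _)]mulrCA.
    by rewrite sumrB -!mulr_sumr -/(cf phi) -/(cf psi) mulrC subrr.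
  have g1 := hom1 hg.
  have := homker g hg cg t2; rewrite g1 /g p2 q2 mulr0 mulr1 sub0r.
  move/eqP; rewrite oppr_eq0 => /eqP cphi.
  have := homker phi hphi cphi t1.
  have phi1 := hom1 hphi.
  by rewrite p1 phi1; apply/eqP; exact: oner_neq0.
- case/cyclicP => g Hg.
  pose v : galg gT K := [ffun h => (h == 1%g)%:R - (h == g)%:R].
  have vE : forall a x, gamul v a x = a x - a (g^-1 * x)%g.
    move=> a x; rewrite gamulE.
    under eq_bigr => h _ do rewrite ffunE mulrBl.
    by rewrite sumrB !sum_delta invg1 mul1g.
  exists v => a; split.
  + move=> [c ->]; apply/ffunP => x; by rewrite vE !ffunE subrr.
  + move=> H0.
    have ax : forall x, a x = a (g^-1 * x)%g.
      move=> x; apply/eqP; rewrite -subr_eq0 -vE H0.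
      by rewrite galg0E.
    exists (a 1%g); apply/ffunP => x; rewrite !ffunE mulr1.
    have : x \in <[g]>%g by rewrite -Hg inE.
    case/cycleP => k ->.
    elim: k => [|k IH]; first by rewrite expg0.
    by rewrite expgS [LHS]ax mulKg.
Qed.
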